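(* Let $\mathbb{K}\in\{\mathbb{R},\mathbb{C}\}$. Let $S_1,\dots,S_M$ be non-trivial, independent linear subspaces of $\mathbb{K}^m$ with dimensions $d_1,\dots,d_M$, $d_{\max}=\max_i d_i$, and $\mathcal{U}=\bigcup_{i=1}^M S_i$. Let $\mathbf{W}=[w_1\cdots w_n]\in\mathbb{K}^{m\times n}$ be a rank $r$ matrix whose columns are drawn from $\mathcal{U}$, such that the columns drawn from each $S_i$ form a generic set for $S_i$. Factor $\mathbf{W}=\mathbf{W}\mathbf{W}^\dagger\mathbf{W}$ and let $Q$ be either $\mathrm{bin}(\mathbf{W}^\dagger\mathbf{W})$ or $\mathrm{abs}(\mathbf{W}^\dagger\mathbf{W})$. Then $\Xi_{\mathbf{W}}=Q^{d_{\max}}$ is a similarity matrix for $\mathbf{W}$. Moreover, if $\mathbf{W}=U_r\Sigma_rV_r^*$ is the skinny singular value decomposition of $\mathbf{W}$, then $\mathbf{W}^\dagger\mathbf{W}=V_rV_r^*$.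
   Context: Subspaces are independent if $\dim(S_1+\dots+S_M)=\sum_i\dim S_i\le m$. Data drawn from a $d$-dimensional subspace $S$ is generic if it has more than $d$ elements and any $d$ of them form a basis of $S$. $\mathrm{abs}(A)(i,j)=|A(i,j)|$; $\mathrm{bin}(A)(i,j)=1$ if $A(i,j)\ne0$, else $0$. A similarity matrix for $\mathbf{W}$ is a symmetric matrix $\Xi$ with $\Xi(i,j)\neq0$ iff $w_i,w_j$ come from the same subspace $S_l$. The skinny SVD of a rank $r$ matrix is $U_r\Sigma_rV_r^*$ with $U_r$, $V_r$ the first $r$ left/right singular vectors and $\Sigma_r=\mathrm{diag}(\sigma_1,\dots,\sigma_r)$. $\dagger$ denotes the Moore--Penrose pseudoinverse. *)

(* Defs.v *)
(* K ranges over the reals (a realType R) and the complex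
   numbers R[i] (mathcomp-real-closed's complex R). *)
From HB Require Import structures.
From mathcomp Require Import all_boot all_order all_algebra.
From mathcomp Require Import reals complex.
Set Implicit Arguments. Unset Strict Implicit. Unset Printing Implicit Defensive.
Import Order.TTheory GRing.Theory Num.Theory.
Local Open Scope ring_scope.

Section Defs.
Variable K : numFieldType.
(* the conjugation of K: identity on R, complex conjugation on C *)
Variable cj : K -> K.

Definition adjmx {p q} (A : 'M[K]_(p, q)) : 'M[K]_(q, p) := (map_mx cj A)^T.

Definition is_pinv {p q} (A : 'M[K]_(p, q)) (X : 'M[K]_(q, p)) : Prop :=
  [/\ A *m X *m A = A, X *m A *m X = X,
      adjmx (A *m X) = A *m X & adjmx (X *m A) = X *m A].

Definition absmx {p q} (A : 'M[K]_(p, q)) : 'M[K]_(p, q) :=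
  map_mx (fun x => `|x|) A.
Definition binmx {p q} (A : 'M[K]_(p, q)) : 'M[K]_(p, q) :=
  map_mx (fun x => (x != 0)%:R) A.

(* subspaces of K^m are represented by square matrices (their row space);
   the dimension of S is \rank S.  Column j of W is drawn from S: *)
Definition drawn_from {m n} (W : 'M[K]_(m, n)) (S : 'M[K]_m) (j : 'I_n) : bool :=
  ((col j W)^T <= S)%MS.

Definition colset {m n} (W : 'M[K]_(m, n)) (A : {set 'I_n}) : 'M[K]_(#|A|, m) :=
  \matrix_(k < #|A|, l < m) W l (enum_val k).

Definition is_basis_of {p m} (B : 'M[K]_(p, m)) (S : 'M[K]_m) : Prop :=
  row_free B /\ (B == S)%MS.

Definition generic_for {m n} (W : 'M[K]_(m, n)) (S : 'M[K]_m) (A : {set 'I_n}) : Prop :=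
  (\rank S < #|A|)%N /\
  (forall B : {set 'I_n}, B \subset A -> #|B| = \rank S -> is_basis_of (colset W B) S).

Definition similarity_matrix {m n M} (W : 'M[K]_(m, n)) (S : 'I_M -> 'M[K]_m)
    (Xi : 'M[K]_n) : Prop :=
  Xi^T = Xi /\
  (forall i j : 'I_n, Xi i j != 0 <->
     exists l : 'I_M, drawn_from W (S l) i /\ drawn_from W (S l) j).

Definition skinny_svd {m n r} (W : 'M[K]_(m, n)) (U : 'M[K]_(m, r))
    (sigma : 'rV[K]_r) (V : 'M[K]_(n, r)) : Prop :=
  [/\ adjmx U *m U = 1%:M, adjmx V *m V = 1%:M,
      (forall i : 'I_r, 0 < sigma 0 i),
      (forall i j : 'I_r, (i <= j)%N -> sigma 0 j <= sigma 0 i)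
    & W = U *m diag_mx sigma *m adjmx V].

Definition corollary4_prop : Prop :=
  forall (m n M r : nat) (S : 'I_M -> 'M[K]_m) (W : 'M[K]_(m, n))
         (X : 'M[K]_(n, m)),
  (forall i, 0 < \rank (S i))%N ->
  \rank (\sum_(i < M) S i)%MS = (\sum_(i < M) \rank (S i))%N ->
  \rank W = r ->
  (forall j : 'I_n, exists i : 'I_M, drawn_from W (S i) j) ->
  (forall i : 'I_M, generic_for W (S i) [set j | drawn_from W (S i) j]) ->
  is_pinv W X ->
  (forall Q : 'M[K]_n, Q = binmx (X *m W) \/ Q = absmx (X *m W) ->
     similarity_matrix W S (Q ^+ (\max_(i < M) \rank (S i))%N)) /\
  (forall (U : 'M[K]_(m, r)) (sigma : 'rV[K]_r) (V : 'M[K]_(n, r)),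
     skinny_svd W U sigma V -> X *m W = V *m adjmx V).

End Defs.

(* Main.v *)
Require Import Defs.
From HB Require Import structures.
From mathcomp Require Import all_boot all_order all_algebra.
From mathcomp Require Import reals complex.
From mathcomp Require Import zify.
Set Implicit Arguments. Unset Strict Implicit. Unset Printing Implicit Defensive.
Import Order.TTheory GRing.Theory Num.Theory.
Local Open Scope ring_scope.

Section Gen.
Variable K : numFieldType.
Variable cj : {rmorphism K -> K}.
Hypothesis cjK : involutive cj.
Hypothesis cj_ge0 : forall x : K, 0 <= cj x * x.
Hypothesis cj_eq0 : forall x : K, cj x * x = 0 -> x = 0.
Hypothesis cj_norm : forall x : K, `|cj x| = `|x|.

Local Notation adj := (adjmx cj).

Lemma adjM p q s (A : 'M[K]_(p, q)) (B : 'M[K]_(q, s)) : adj (A *m B) = adj B *m adj A.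
Proof. by rewrite /adjmx map_mxM trmx_mul. Qed.

Lemma adjK p q (A : 'M[K]_(p, q)) : adj (adj A) = A.
Proof. by apply/matrixP=> i j; rewrite /adjmx !mxE cjK. Qed.

Lemma adj1 p : adj (1%:M : 'M[K]_p) = 1%:M.
Proof. by apply/matrixP=> i j; rewrite /adjmx !mxE eq_sym; case: eqP; rewrite ?rmorph0 ?rmorph1. Qed.

Lemma adj_diag p (s : 'rV[K]_p) : adj (diag_mx s) = diag_mx (map_mx cj s).
Proof. by apply/matrixP=> i j; rewrite /adjmx !mxE eq_sym; case: eqP => [->|]; rewrite ?rmorph0 ?mulr1n ?mulr0n. Qed.

Lemma svd_part m n r (W : 'M[K]_(m, n)) X (U : 'M[K]_(m, r)) sigma V :
  is_pinv cj W X -> skinny_svd cj W U sigma V -> X *m W = V *m adj V.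
Proof.
case=> [WXW XWX hWX hXW] [hU hV spos _ defW].
pose Y := V *m diag_mx (\row_i (sigma 0 i)^-1) *m adj U.
have dd : diag_mx (\row_i (sigma 0 i)^-1) *m diag_mx sigma = 1%:M.
  apply/matrixP=> i j; rewrite mul_diag_mx !mxE; case: eqP => [->|]; rewrite ?mulr1n ?mulr0n ?mulr0 //.
  by rewrite mulVf // gt_eqF.
have YW : Y *m W = V *m adj V.
  rewrite defW /Y !mulmxA -[V *m _ *m _ *m U](mulmxA) hU mulmx1.
  by rewrite -(mulmxA V) dd mulmx1.
have WYW : W *m Y *m W = W.
  rewrite -(mulmxA W) YW {1}defW -!mulmxA.
  by rewrite (mulmxA (adj V)) hV mul1mx [RHS]defW mulmxA.
have hYW : adj (Y *m W) = Y *m W by rewrite YW adjM adjK.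
rewrite -YW.
have -> : X *m W = (X *m W) *m (Y *m W).
  have e : (X *m W) *m (Y *m W) = X *m (W *m Y *m W) by rewrite !mulmxA.
  by rewrite e WYW.
rewrite -{1}hXW -hYW -adjM.
have e2 : (Y *m W) *m (X *m W) = Y *m (W *m X *m W) by rewrite !mulmxA.
by rewrite e2 WXW.
Qed.

Definition dmx n (C : {set 'I_n}) : 'M[K]_n := diag_mx (\row_k ((k \in C)%:R)).

Lemma dmxMl n p (C : {set 'I_n}) (A : 'M[K]_(n, p)) i j :
  (dmx C *m A) i j = (i \in C)%:R * A i j.
Proof. by rewrite mul_diag_mx !mxE. Qed.

Lemma dmxMr p n (C : {set 'I_n}) (A : 'M[K]_(p, n)) i j :
  (A *m dmx C) i j = A i j * (j \in C)%:R.
Proof. by rewrite mul_mx_diag !mxE. Qed.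

Lemma dmxI n (C C' : {set 'I_n}) : dmx C *m dmx C' = dmx (C :&: C').
Proof.
apply/matrixP=> i j; rewrite dmxMl /dmx !mxE inE.
by case: (i \in C); case: (i \in C'); case: (i == j); rewrite ?mul1r ?mul0r ?mulr0n ?mulr1n.
Qed.

Lemma dmx_sub n p (C C' : {set 'I_n}) (T : 'M[K]_(n, p)) :
  C \subset C' -> (dmx C *m T <= dmx C' *m T)%MS.
Proof.
move=> /setIidPl sCC.
by rewrite -sCC -dmxI -mulmxA submxMl.
Qed.

Lemma map_dmx n (C : {set 'I_n}) : map_mx cj (dmx C) = dmx C.
Proof.
apply/matrixP=> i j; rewrite /dmx !mxE.
by case: (i \in C); case: (i == j); rewrite ?mulr1n ?mulr0n ?rmorph0 ?rmorph1.
Qed.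

Section Core.
Variables (n : nat) (P T Q : 'M[K]_n) (A : {set 'I_n}) (d : nat) (i : 'I_n).
Hypothesis hT : T = P^T.
Hypothesis hP : P = map_mx cj T *m T^T.
Hypothesis hQ : forall a b, (Q a b != 0) = (P a b != 0).
Hypothesis Qge0 : forall a b, 0 <= Q a b.
Hypothesis Ablock : forall a b, a \in A -> P a b != 0 -> b \in A.
Hypothesis h1 : forall C : {set 'I_n}, C \subset A -> (minn #|C| d <= \rank (dmx C *m T))%N.
Hypothesis h2 : (\rank (dmx A *m T) <= d)%N.
Hypothesis dpos : (0 < d)%N.
Hypothesis dA : (d < #|A|)%N.
Hypothesis iA : i \in A.

Lemma Psym a b : P b a = cj (P a b).
Proof.
rewrite hP !mxE rmorph_sum; apply: eq_bigr => k _.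
by rewrite !mxE rmorphM cjK mulrC.
Qed.

Lemma Pdiag a : a \in A -> P a a != 0.
Proof.
move=> aA; apply/negP=> /eqP Paa.
have Z : forall k, T a k = 0.
  move=> k; apply: cj_eq0.
  move: Paa; rewrite hP mxE => /psumr_eq0P H.
  have nn : forall k' : 'I_n, true -> 0 <= (map_mx cj T) a k' * T^T k' a.
    by move=> k' _; rewrite !mxE.
  by have := H nn k isT; rewrite !mxE.
have : (minn #|[set a]| d <= \rank (dmx [set a] *m T))%N by apply: h1; rewrite sub1set.
have -> : dmx [set a] *m T = 0.
  apply/matrixP=> u v; rewrite dmxMl !mxE inE.
  by case: eqP => [->|]; rewrite ?Z ?mulr0 ?mul0r.
by rewrite mxrank0 cards1 (minn_idPl dpos).
Qed.

Lemma Qpow_ge0 t a b : 0 <= (Q ^+ t) a b.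
Proof.
elim: t a b => [|t IH] a b; first by rewrite expr0 mxE ler0n.
rewrite exprSr -mulmxE mxE; apply: sumr_ge0 => k _; exact: mulr_ge0.
Qed.

Definition L t := [set b | (Q ^+ t) i b != 0].

Lemma LSl t b : b \in L t.+1 -> exists2 a, a \in L t & P a b != 0.
Proof.
rewrite inE exprSr -mulmxE mxE => H.
apply/exists_inP; apply: contraNT H => /exists_inPn H.
apply/eqP; apply: big1 => a _.
case: (boolP (a \in L t)) => aL.
  by have := H a aL; rewrite -hQ negbK => /eqP ->; rewrite mulr0.
by move: aL; rewrite inE negbK => /eqP ->; rewrite mul0r.
Qed.

Lemma LSr t a b : a \in L t -> P a b != 0 -> b \in L t.+1.
Proof.
rewrite !inE -hQ => Ha Hb; rewrite exprSr -mulmxE mxE.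
apply/negP => /eqP S0.
have nn : forall k : 'I_n, true -> 0 <= (Q ^+ t) i k * Q k b.
  by move=> k _; apply: mulr_ge0; [apply: Qpow_ge0 | apply: Qge0].
have := psumr_eq0P nn S0; move=> /(_ a isT) /eqP.
by rewrite mulf_eq0 (negbTE Ha) (negbTE Hb).
Qed.

Lemma L0 : L 0 = [set i].
Proof.
apply/setP=> b; rewrite !inE expr0 mxE.
rewrite [b == i]eq_sym.
by case: (i == b); rewrite ?oner_eq0 ?eqxx.
Qed.

Lemma LA t : L t \subset A.
Proof.
elim: t => [|t IH]; first by rewrite L0 sub1set.
apply/subsetP=> b /LSl [a aL Pab].
by apply: Ablock Pab; apply: (subsetP IH).
Qed.

Lemma Lmono t : L t \subset L t.+1.
Proof.
apply/subsetP=> b bL; apply: (LSr bL).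
by apply: Pdiag; apply: (subsetP (LA t)).
Qed.

Lemma Lmono' s t : (s <= t)%N -> L s \subset L t.
Proof.
move/subnK <-; elim: (t - s)%N => [|k IH] //=.
by apply: subset_trans IH (Lmono _).
Qed.

Lemma closed_all (C : {set 'I_n}) : C \subset A -> i \in C ->
  (forall y b, y \in C -> P y b != 0 -> b \in C) -> C = A.
Proof.
move=> CA iC cl; apply/eqP; rewrite eqEsubset CA /=; apply/negPn/negP => nAC.
set D := A :\: C.
have D0 : (0 < #|D|)%N by rewrite card_gt0 setD_eq0.
have cardCD : (#|C| + #|D| = #|A|)%N.
  by rewrite /D cardsDS // addnC subnK // subset_leq_card.
have C0 : (0 < #|C|)%N by apply/card_gt0P; exists i.
set N1 := dmx C *m T. set N2 := dmx D *m T.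
have e1 : N1 *m dmx C = N1.
  apply/matrixP=> a b; rewrite dmxMr dmxMl hT mxE.
  case: (boolP (a \in C)) => aC; last by rewrite /= !mul0r.
  case: (boolP (b \in C)) => bC; first by rewrite mulr1.
  have Pab : P a b = 0 by apply/eqP; apply: contraNT bC; exact: cl.
  by rewrite Psym Pab rmorph0 !mulr0.
have e2 : N2 *m dmx C = 0.
  apply/matrixP=> a b; rewrite dmxMr dmxMl hT !mxE.
  case: (boolP (b \in C)) => bC; last by rewrite /= mulr0.
  case: (boolP (a \in D)) => aD; last by rewrite /= !mul0r.
  have Pba : P b a = 0.
    apply/eqP; apply: contraTT aD => /(cl _ _ bC) aC.
    by rewrite /D inE aC.
  by rewrite Pba mulr0 mul0r.
have cap0 : (N1 :&: N2)%MS = 0.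
  set v := (N1 :&: N2)%MS.
  have /submxP [x ex] : (v <= N1)%MS := capmxSl _ _.
  have /submxP [y ey] : (v <= N2)%MS := capmxSr _ _.
  have H : v *m dmx C = v by rewrite ex -mulmxA e1.
  by rewrite -H ey -mulmxA e2 mulmx0.
have eqr := mxrank_disjoint_sum cap0.
have sub : ((N1 + N2)%MS <= dmx A *m T)%MS by rewrite addsmx_sub !dmx_sub // subsetDl.
have r12 := mxrankS sub.
have h1C := h1 CA. have h1D := h1 (subsetDl A C).
rewrite -/N1 -/N2 -/D in h1C h1D.
lia.
Qed.

Lemma step t : L t.+1 != A -> (\rank (dmx (L t) *m T) < \rank (dmx (L t.+1) *m T))%N.
Proof.
move=> neq.
have sub := dmx_sub T (Lmono t).
rewrite ltn_neqAle mxrankS // andbT.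
apply: contra neq => /eqP req.
have /eqmxP eqN : (dmx (L t) *m T == dmx (L t.+1) *m T)%MS.
  by rewrite -(mxrank_leqif_eq sub).2 req eqxx.
apply/eqP; apply: closed_all; first exact: LA.
  by apply: (subsetP (Lmono' (leq0n t.+1))); rewrite L0 set11.
move=> y b yC Pyb; apply/negPn/negP => bC.
have Hb : forall a, a \in L t -> P a b = 0.
  by move=> a aL; apply/eqP; apply: contraNT bC; exact: LSr.
have : (row y T <= dmx (L t) *m T)%MS.
  have -> : row y T = row y (dmx (L t.+1) *m T).
    by apply/rowP=> k; rewrite [LHS]mxE [RHS]mxE dmxMl yC mul1r.
  by rewrite eqN row_sub.
case/submxP => g eg.
have E : row y P = map_mx cj g *m (dmx (L t) *m P).
  rewrite {1}hP row_mul -map_row eg map_mxM map_mxM map_dmx.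
  by rewrite hP !mulmxA.
move: Pyb; have -> : P y b = (row y P) 0 b by rewrite mxE.
rewrite E mxE big1 ?eqxx // => a _.
rewrite dmxMl; case: (boolP (a \in L t)) => aL; first by rewrite Hb // !mulr0.
by rewrite /= mul0r mulr0.
Qed.

Lemma core_main t b : (d <= t)%N -> b \in A -> (Q ^+ t) i b != 0.
Proof.
have claim : forall s, L s = A \/ (s < \rank (dmx (L s) *m T))%N.
  elim=> [|s [IH|IH]].
  - right; rewrite L0.
    by have := @h1 [set i]; rewrite sub1set cards1 (minn_idPl dpos) => /(_ iA).
  - left; apply/eqP; rewrite eqEsubset LA /=.
    by rewrite -{1}IH Lmono.
  - have [->|ne] := eqVneq (L s.+1) A; [by left | right].
    exact: leq_ltn_trans IH (step ne).
move=> dt bA.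
have Ld : L d = A.
  case: (claim d) => // H.
  have : (\rank (dmx (L d) *m T) <= d)%N.
    exact: leq_trans (mxrankS (dmx_sub T (LA d))) h2.
  by rewrite leqNgt H.
have : b \in L t by apply: (subsetP (Lmono' dt)); rewrite Ld.
by rewrite inE.
Qed.

End Core.

Lemma sub_of_size (I : finType) (Y : {set I}) k : (k <= #|Y|)%N ->
  exists2 B : {set I}, B \subset Y & #|B| = k.
Proof.
move=> kY; exists [set x in take k (enum Y)].
  by apply/subsetP => x; rewrite inE => /mem_take; rewrite mem_enum.
rewrite cardsE; move/card_uniqP: (take_uniq k (enum_uniq (mem Y))) => ->.
by rewrite size_takel // -cardE.
Qed.

Lemma mul_dmxl n p (C : {set 'I_n}) (A : 'M[K]_(n, p)) :
  dmx C *m A = \matrix_(a, b) ((a \in C)%:R * A a b).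
Proof. by apply/matrixP => a b; rewrite dmxMl mxE. Qed.

Lemma tr_dmx n (C : {set 'I_n}) : (dmx C)^T = dmx C.
Proof. exact: tr_diag_mx. Qed.

Lemma rank_dmx n (E : {set 'I_n}) : (\rank (dmx E) <= #|E|)%N.
Proof.
pose Mx : 'M[K]_(#|E|, n) := \matrix_(k, b) ((enum_val k == b)%:R).
apply: leq_trans (rank_leq_row Mx); apply: mxrankS; apply/row_subP => a.
case: (boolP (a \in E)) => aE.
  have -> : row a (dmx E) = row (enum_rank_in aE a) Mx.
    apply/rowP => b; rewrite /dmx !mxE enum_rankK_in // aE.
    by case: (a == b).
  exact: row_sub.
have -> : row a (dmx E) = 0.
  by apply/rowP => b; rewrite /dmx !mxE (negbTE aE) mul0rn.
exact: sub0mx.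
Qed.

Theorem gen_main : corollary4_prop cj.
Proof.
move=> m n M r S W X nontriv indep rk cover generic pinv.
split; last by move=> U sigma V; exact: svd_part.
have [WXW XWX hWX hXW] := pinv.
set P := X *m W.
have PP : P *m P = P by rewrite /P mulmxA XWX.
have Ph : adj P = P := hXW.
have WP : W *m P = W by rewrite /P mulmxA WXW.
set T := P^T.
have hP : P = map_mx cj T *m T^T.
  have -> : map_mx cj T = adj P by apply/matrixP=> a b; rewrite !mxE.
  by rewrite /T trmxK Ph PP.
have Psym : forall a b, P b a = cj (P a b) by move=> a b; rewrite -{1}Ph !mxE.
pose Al := fun l => [set j | drawn_from W (S l) j].
have rowsS : forall (C : {set 'I_n}) l, C \subset Al l -> (dmx C *m W^T <= S l)%MS.
  move=> C l CA; apply/row_subP => a; rewrite mul_dmxl.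
  have -> : row a (\matrix_(a0, b) ((a0 \in C)%:R * W^T a0 b)) = (a \in C)%:R *: (col a W)^T.
    by apply/rowP => k; rewrite !mxE.
  case: (boolP (a \in C)) => aC; last by rewrite scale0r sub0mx.
  rewrite scale1r; have := subsetP CA a aC; by rewrite inE.
have rankconv : forall C, \rank (dmx C *m T) = \rank (dmx C *m W^T).
  move=> C; rewrite -mxrank_tr trmx_mul tr_dmx /T trmxK.
  rewrite -[RHS]mxrank_tr trmx_mul tr_dmx trmxK.
  apply/eqP; rewrite eqn_leq; apply/andP; split.
    by rewrite /P -mulmxA; exact: mxrankM_maxr.
  by rewrite -{1}WP -mulmxA; exact: mxrankM_maxr.
have dsum : mxdirect (\sum_(l < M) S l) by rewrite mxdirectE /= indep.
have capS := mxdirect_sumsP dsum.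
have disj : forall j l l', j \in Al l -> j \in Al l' -> l = l'.
  move=> j l l' jl jl'; apply/eqP; apply/negPn/negP => ne.
  have w0 : (col j W)^T = 0.
    apply/eqP; rewrite -submx0 -(capS l isT) sub_capmx; apply/andP; split.
      by rewrite inE in jl.
    apply: (sumsmx_sup l'); first by rewrite eq_sym ne.
    by rewrite inE in jl'.
  have [gt0 gen] := generic l.
  have gt : (\rank (S l) < #|Al l|)%N := gt0.
  have hk : ((\rank (S l)).-1 <= #|Al l :\ j|)%N.
    move: gt; rewrite (cardsD1 j) jl; have := nontriv l; lia.
  have [B' B'sub B'card] := sub_of_size hk.
  have jB' : j \notin B' by apply/negP => /(subsetP B'sub); rewrite !inE eqxx.
  have Bsub : j |: B' \subset Al l.
    by rewrite subUset sub1set jl (subset_trans B'sub) // subD1set.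
  have Bcard : #|j |: B'| = \rank (S l).
    by rewrite cardsU1 jB' B'card; have := nontriv l; lia.
  have [rf _] := gen _ Bsub Bcard.
  have jB : j \in j |: B' by rewrite setU11.
  set k := enum_rank_in jB j.
  have r0 : row k (colset W (j |: B')) = 0.
    apply/rowP => u; rewrite !mxE enum_rankK_in //.
    by have := congr1 (fun Z : 'M[K]_(1, m) => Z 0 u) w0; rewrite !mxE.
  have := rowE k (colset W (j |: B')); rewrite r0 -(mul0mx _ (colset W (j |: B'))).
  move=> /esym /(row_free_inj rf) => /(congr1 (fun Z : 'rV[K]_#|j |: B'| => Z 0 k)); rewrite !mxE !eqxx /=.
  by move/eqP; rewrite oner_eq0.
have sumD : \sum_(l < M) dmx (Al l) = 1%:M.
  apply/matrixP => a b; rewrite summxE.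
  have [l0 al0] := cover a.
  have al0' : a \in Al l0 by rewrite inE.
  rewrite (bigD1 l0) //= big1 ?addr0.
    by rewrite /dmx !mxE al0'.
  move=> l ne; rewrite /dmx !mxE.
  case: (boolP (a \in Al l)) => al; last by rewrite mul0rn.
  by rewrite (disj _ _ _ al al0') eqxx in ne.
have indepL : forall p (v : 'I_M -> 'M[K]_(p, m)), (forall k, (v k <= S k)%MS) ->
    \sum_k v k = 0 -> forall k, v k = 0.
  move=> p v vS s0 k; apply/eqP; rewrite -submx0 -(capS k isT) sub_capmx vS /=.
  move: s0; rewrite (bigD1 k) //= => /eqP; rewrite addr_eq0 => /eqP ->.
  rewrite eqmx_opp; apply: summx_sub_sums => j _; exact: vS.
have kerD : forall p (c : 'M[K]_(n, p)) l, W *m c = 0 -> W *m dmx (Al l) *m c = 0.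
  move=> p c l Wc.
  have sub_l : forall k, ((W *m dmx (Al k) *m c)^T <= S k)%MS.
    move=> k; rewrite !trmx_mul tr_dmx; apply: mulmx_sub; apply: rowsS; exact: subxx.
  have sum0 : \sum_k (W *m dmx (Al k) *m c)^T = 0.
    have -> : \sum_k (W *m dmx (Al k) *m c)^T = (W *m (\sum_k dmx (Al k)) *m c)^T.
      apply/matrixP => a b; rewrite summxE [RHS]mxE mulmx_sumr mulmx_suml summxE.
      by apply: eq_bigr => k _; rewrite mxE.
    by rewrite sumD mulmx1 Wc trmx0.
  have := indepL _ _ sub_l sum0 l.
  by move=> H; rewrite -[LHS]trmxK H trmx0.
have comm : forall l, P *m dmx (Al l) = dmx (Al l) *m P.
  move=> l; set D := dmx (Al l).
  have e : W *m (1%:M - P) = 0 by rewrite mulmxBr mulmx1 WP subrr.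
  have e2 : P *m D *m (1%:M - P) = 0.
    by rewrite /P -!mulmxA (mulmxA W) kerD // mulmx0.
  have e3 : P *m D = P *m D *m P.
    by apply/eqP; rewrite -subr_eq0 -[X in X - _]mulmx1 -mulmxBr e2.
  have aD : adj D = D by rewrite /adjmx map_dmx tr_dmx.
  have H : adj (P *m D) = adj (P *m D *m P) by rewrite -e3.
  rewrite (adjM (P *m D) P) (adjM P D) aD Ph in H.
  by rewrite H mulmxA -e3.
have Ablock : forall l a b, a \in Al l -> P a b != 0 -> b \in Al l.
  move=> l a b al; apply: contraNT => bl; apply/eqP.
  have := congr1 (fun Z : 'M[K]_n => Z a b) (comm l).
  by rewrite dmxMr dmxMl al (negbTE bl) /= mulr0 mul1r => ->.
move=> Q hQdef; rewrite -/P in hQdef.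
have hQ : forall a b, (Q a b != 0) = (P a b != 0).
  move=> a b; case: hQdef => ->; rewrite mxE; last by rewrite normr_eq0.
  by case: (P a b != 0); rewrite ?oner_eq0 ?eqxx.
have Qge0 : forall a b, 0 <= Q a b.
  by move=> a b; case: hQdef => ->; rewrite mxE ?ler0n ?normr_ge0.
have QT : Q^T = Q.
  apply/matrixP => a b; case: hQdef => ->; rewrite [LHS]mxE [LHS]mxE [RHS]mxE Psym.
    by rewrite fmorph_eq0.
  by rewrite cj_norm.
split.
  elim: (\max_(i < M) \rank (S i))%N => [|k IH]; first by rewrite expr0 trmx1.
  by rewrite exprSr -mulmxE trmx_mul IH QT mulmxE -exprS exprSr.
move=> i j; split.
  move=> nz; have [l il] := cover i; exists l; split => //.
  have il' : i \in Al l by rewrite inE.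
  suff : j \in Al l by rewrite inE.
  move: nz; elim: (\max_(i < M) \rank (S i))%N j => [|t IH] b.
    move=> H; have : b \in L Q i 0 by rewrite inE.
    by rewrite L0 inE => /eqP ->.
  move=> H; have : b \in L Q i t.+1 by rewrite inE.
  case/(LSl hQ) => a aL Pab; apply: (Ablock _ _ _ _ Pab); apply: IH.
  by rewrite inE in aL.
case=> l [il jl].
have il' : i \in Al l by rewrite inE.
have jl' : j \in Al l by rewrite inE.
have [gt0 gen] := generic l.
have gt : (\rank (S l) < #|Al l|)%N := gt0.
apply: (core_main (P:=P) (T:=T) (A:=Al l) (d:=\rank (S l)) (i:=i)) => //.
- by move=> a b; apply: Ablock.
- move=> C CA; rewrite rankconv.
  set k := minn #|C| (\rank (S l)).
  have [C' C'C C'card] := sub_of_size (geq_minl #|C| (\rank (S l))).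
  have hE : (\rank (S l) - k <= #|Al l :\: C|)%N.
    rewrite cardsDS // /k; have := subset_leq_card CA; move: gt; rewrite /reverse_coercion; lia.
  have [E EA Ecard] := sub_of_size hE.
  have Bsub : C' :|: E \subset Al l.
    rewrite subUset (subset_trans C'C CA) /=.
    by apply: subset_trans EA (subsetDl _ _).
  have dj : C' :&: E = set0.
    apply/setP => x; rewrite !inE; apply/negP => /andP [xC' xE].
    by have := subsetP EA x xE; rewrite !inE (subsetP C'C x xC').
  have Bcard : #|C' :|: E| = (\rank (S l)).
    rewrite cardsU dj cards0 C'card Ecard /k; lia.
  have [rf _] := gen _ Bsub Bcard.
  have rB : (\rank (S l) <= \rank (dmx (C' :|: E) *m W^T))%N.
    have <- : \rank (colset W (C' :|: E)) = (\rank (S l)) by rewrite (eqP rf).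
    apply: mxrankS; apply/row_subP => u.
    have -> : row u (colset W (C' :|: E)) = row (enum_val u) (dmx (C' :|: E) *m W^T).
      by apply/rowP => v; rewrite mul_dmxl !mxE enum_valP mul1r.
    exact: row_sub.
  have split : dmx (C' :|: E) = dmx ((C' :|: E) :&: C) + dmx ((C' :|: E) :\: C).
    apply/matrixP => a b; rewrite /dmx !mxE !inE.
    by case: (a \in C); case: (a \in C'); case: (a \in E); rewrite /= ?mul0rn ?addr0 ?add0r.
  move: rB; rewrite split mulmxDl => rB.
  have := leq_trans rB (mxrank_add _ _).
  have r1 : (\rank (dmx ((C' :|: E) :&: C) *m W^T) <= \rank (dmx C *m W^T))%N.
    exact: mxrankS (dmx_sub _ (subsetIr _ _)).
  have r2 : (\rank (dmx ((C' :|: E) :\: C) *m W^T) <= #|E|)%N.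
    apply: leq_trans (mxrankM_maxl _ _) _; apply: leq_trans (rank_dmx _) _.
    apply: subset_leq_card; apply/subsetP => x; rewrite !inE => /andP [xC].
    case/orP => // xC'; by rewrite (subsetP C'C x xC') in xC.
  move: r1 r2; rewrite Ecard /k; lia.
- by rewrite rankconv; apply: mxrankS; apply: rowsS; exact: subxx.
- by rewrite (bigD1 l) //= leq_maxl.
Qed.

End Gen.

Theorem corollary4 (R : realType) :
  corollary4_prop (K := R) id /\
  corollary4_prop (K := R[i]) (fun z => z^*).
Proof.
split.
- have := @gen_main R idfun (fun x => erefl) _ _ (fun x => erefl).
  apply.
  + by move=> x; rewrite -expr2 sqr_ge0.
  + by move=> x /eqP; rewrite mulf_eq0 orbb => /eqP.
- have := @gen_main R[i] Num.conj (@conjCK _) _ _ (@norm_conjC _).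
  apply.
  + by move=> x; rewrite mulrC -normCK exprn_ge0.
  + by move=> x; rewrite mulrC -normCK => /eqP; rewrite expf_eq0 /= normr_eq0 => /eqP.
Qed.
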